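(* Let $\mathcal{X}^{+}$ be any Artin spherical monoid with its classical generators $x_1,\dots,x_n$ (one generator per vertex of the Coxeter graph), and let $a_k$ denote the number of elements of $\mathcal{X}^{+}$ of length $k$. Then the sequence $(a_k)_{k\ge 1}$ has growth rate less than $4$, i.e. $\limsup_{k\to\infty} a_k^{1/k}<4$.
   Context: A Coxeter graph on vertices $x_1,\dots,x_n$ assigns to each pair $i\neq j$ a label $r_{ij}\in\{2,3,4,\dots\}\cup\{\infty\}$ (no edge means $r_{ij}=2$, an unlabeled edge means $r_{ij}=3$). The associated Artin monoid is $\langle x_1,\dots,x_n \mid x_ix_jx_ix_j\cdots = x_jx_ix_jx_i\cdots\ (\text{both sides of length } r_{ij}),\ r_{ij}<\infty\rangle$; since the relations are homogeneous, every element has a well-defined length. An Artin spherical monoid is the Artin monoid of a finite Coxeter graph each of whose connected components is one of: $A_n$ ($n\ge1$, a path $x_1-\cdots-x_n$ with all labels $3$); $B_n$ ($n\ge2$, the same path with the last edge $x_{n-1}x_n$ labeled $4$); $D_n$ ($n\ge4$, a path $x_1-\cdots-x_{n-2}$ with $x_{n-1}$ and $x_n$ both joined to $x_{n-2}$, all labels $3$); $E_n$ ($n=6,7,8$, a path $x_1-x_2-x_3-x_5-x_6-\cdots-x_n$ with $x_4$ joined to $x_3$, all labels $3$); $F_4$ (path $x_1-x_2-x_3-x_4$ with $x_2x_3$ labeled $4$, other labels $3$); $G_2$ (one edge labeled $6$); $H_3$, $H_4$ (paths on $3$, resp. $4$ vertices with the edge $x_1x_2$ labeled $5$ and other labels $3$);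 $I_2(p)$ ($p\ge5$, $p\ne6$, one edge labeled $p$). A sequence $(s_k)$ of positive numbers has growth rate less than $\gamma$ if $\limsup_k \exp(\log(s_k)/k)<\gamma$. *)

(* Defs.v *)
From HB Require Import structures.
From mathcomp Require Import all_boot all_order all_algebra all_fingroup.
From mathcomp Require Import all_classical all_reals all_analysis.
From mathcomp Require Import Rstruct Rstruct_topology.
From Stdlib Require Rdefinitions.

Set Implicit Arguments.
Unset Strict Implicit.
Unset Printing Implicit Defensive.

(* A Coxeter graph on vertices 'I_n is given by labels m i j (for i <> j);
   spherical graphs only have finite labels, so labels are naturals here.
   Label 2 = no edge, 3 = unlabeled edge. *)

Fixpoint alt {n} (s t : 'I_n) (l : nat) : seq 'I_n :=
  if l is l'.+1 then s :: alt t s l' else [::].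

Definition artin_step {n} (m : 'I_n -> 'I_n -> nat) (u v : seq 'I_n) : bool :=
  [exists s : 'I_n, [exists t : 'I_n, (s != t) &&
     has (fun p => (take (m s t) (drop p u) == alt s t (m s t)) &&
                   (v == take p u ++ alt t s (m s t) ++ drop (p + m s t) u))
         (iota 0 (size u).+1)]].

(* The Artin monoid relation restricted to words of length k: since the
   relations are homogeneous, two words represent the same element of the
   monoid iff they are related by the equivalence closure of [artin_step]
   (the step relation is symmetric, so [connect] is that closure). *)
Definition artin_rel {n} (m : 'I_n -> 'I_n -> nat) (k : nat) :
  rel (k.-tuple 'I_n) := fun u v => artin_step m (val u) (val v).

Definition artin_count {n} (m : 'I_n -> 'I_n -> nat) (k : nat) : nat :=
  #| (fun u => finset (connect (@artin_rel n m k) u)) @: [set: k.-tuple 'I_n] |.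

Inductive ctype :=
| TA of nat | TB of nat | TD of nat | TE6 | TE7 | TE8 | TF4 | TG2 | TH3 | TH4
| TI2 of nat.

Definition ctype_valid (t : ctype) : bool :=
  match t with
  | TA k => 1 <= k
  | TB k => 2 <= k
  | TD k => 4 <= k
  | TI2 p => (5 <= p) && (p != 6)
  | _ => true
  end.

Definition ctype_rank (t : ctype) : nat :=
  match t with
  | TA k | TB k | TD k => k
  | TE6 => 6 | TE7 => 7 | TE8 => 8 | TF4 => 4 | TG2 => 2
  | TH3 => 3 | TH4 => 4 | TI2 _ => 2
  end.

(* label of the pair (i, j) with i < j (0-indexed vertices; vertex x_{i+1}
   of the paper is index i) *)
Definition ctype_lab_ord (t : ctype) (i j : nat) : nat :=
  match t with
  | TA k => if j == i.+1 then 3 else 2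
  | TB k => if j == i.+1 then (if j == k.-1 then 4 else 3) else 2
  | TD k => (* path 0 - ... - (k-3); k-2 and k-1 joined to k-3 *)
      if (j == i.+1) && (j <= k - 3) then 3
      else if (i == k - 3) && ((j == k - 2) || (j == k - 1)) then 3
      else 2
  | TE6 | TE7 | TE8 =>
      (* path 0-1-2-4-5-...; 3 joined to 2 *)
      if [|| (i == 0) && (j == 1), (i == 1) && (j == 2), (i == 2) && (j == 3),
             (i == 2) && (j == 4) | (4 <= i) && (j == i.+1)] then 3 else 2
  | TF4 => if j == i.+1 then (if i == 1 then 4 else 3) else 2
  | TG2 => if (i == 0) && (j == 1) then 6 else 2
  | TH3 | TH4 => if j == i.+1 then (if i == 0 then 5 else 3) else 2
  | TI2 p => if (i == 0) && (j == 1) then p else 2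
  end.

Definition ctype_lab (t : ctype) (i j : nat) : nat :=
  ctype_lab_ord t (minn i j) (maxn i j).

(* block-diagonal label function of a disjoint union of components, with the
   vertices of the components numbered consecutively *)
Fixpoint sum_lab (ts : seq ctype) (i j : nat) : nat :=
  match ts with
  | [::] => 2
  | t :: ts' =>
      let r := ctype_rank t in
      if (i < r) && (j < r) then ctype_lab t i j
      else if (r <= i) && (r <= j) then sum_lab ts' (i - r) (j - r)
      else 2
  end.

Definition spherical {n} (m : 'I_n -> 'I_n -> nat) : Prop :=
  exists ts : seq ctype,
    all ctype_valid ts /\ sumn (map ctype_rank ts) = n /\
    exists sigma : {perm 'I_n},
      forall i j : 'I_n, i != j -> m i j = sum_lab ts (sigma i) (sigma j).

Definition growth_limsup (s : nat -> nat) : \bar Rdefinitions.R :=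
  limn_esup (fun k : nat =>
    (expR (ln (s k.+1)%:R / (k.+1)%:R) : Rdefinitions.R)%:E).

(* Main.v *)
Require Import Defs.
From HB Require Import structures.
From mathcomp Require Import all_boot all_order all_algebra all_fingroup.
From mathcomp Require Import all_classical all_reals all_analysis.
From mathcomp Require Import Rstruct Rstruct_topology.
From Stdlib Require Rdefinitions.
From mathcomp Require Import zify.

Set Implicit Arguments.
Unset Strict Implicit.
Unset Printing Implicit Defensive.
Section Words.
Local Open Scope nat_scope.
Variable n : nat.
Variable m : 'I_n -> 'I_n -> nat.
Variable pos : 'I_n -> nat.
Hypothesis pos_lt : forall x, pos x < n.

Definition allowed (a b : 'I_n) : bool := (pos a <= pos b) || (m a b != 2).

Lemma size_alt (s t : 'I_n) l : size (alt s t l) = l.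
Proof. by elim: l s t => [|l IH] s t //=; rewrite IH. Qed.

Definition rk (s : seq 'I_n) : nat := foldl (fun acc x => acc * n + pos x) 0 s.

Lemma foldl_mono (q : seq 'I_n) x y : 0 < n -> x < y ->
  foldl (fun acc x => acc * n + pos x) x q < foldl (fun acc x => acc * n + pos x) y q.
Proof.
move=> n0; elim: q x y => [|a q IH] x y //= xy; apply: IH.
rewrite ltn_add2r ltn_pmul2r //.
Qed.

Lemma swap_lt p q (a b : 'I_n) : pos b < pos a ->
  rk (p ++ b :: a :: q) < rk (p ++ a :: b :: q).
Proof.
move=> ba; have n0 : 0 < n by have := pos_lt a; lia.
rewrite /rk !foldl_cat /=; apply: foldl_mono => //.
set A := foldl _ 0 p.
have := pos_lt a; have := pos_lt b; nia.
Qed.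

Lemma step_swap p q (a b : 'I_n) : a != b -> m a b = 2 ->
  artin_step m (p ++ a :: b :: q) (p ++ b :: a :: q).
Proof.
move=> ab mab; apply/existsP; exists a; apply/existsP; exists b.
rewrite ab andTb; apply/hasP; exists (size p).
  by rewrite mem_iota size_cat /=; lia.
rewrite mab drop_size_cat // take_size_cat //= take0 eqxx andTb.
by rewrite addnC -drop_drop drop_size_cat //= drop0.
Qed.

Lemma not_sorted_split (w : seq 'I_n) : ~~ sorted allowed w ->
  exists p a b q, w = p ++ a :: b :: q /\ ~~ allowed a b.
Proof.
elim: w => [|x s IH] //=.
case: s IH => [|y s] IH //=.
case Hxy: (allowed x y) => /=.
  move=> /IH [p [a [b [q [-> H]]]]].
  by exists (x :: p), a, b, q.
by move=> _; exists [::], x, y, s; rewrite Hxy.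
Qed.

Lemma class_rep k (u : k.-tuple 'I_n) :
  exists w : k.-tuple 'I_n, connect (@artin_rel n m k) u w && sorted allowed w.
Proof.
pose S := [pred w : k.-tuple 'I_n | connect (@artin_rel n m k) u w].
have Su : S u by rewrite /S /= connect0.
case: (arg_minnP (fun w : k.-tuple 'I_n => rk w) Su) => w Sw wmin.
exists w; apply/andP; split; first exact: Sw.
apply/negPn/negP => /not_sorted_split [p [a [b [q [wE nab]]]]].
move: nab; rewrite /allowed negb_or -ltnNge negbK => /andP [ba /eqP mab].
have sz : size (p ++ b :: a :: q) == k.
  by rewrite -(size_tuple w) wE !size_cat.
pose w' := Tuple sz.
have ab : a != b by apply/eqP => E; move: ba; rewrite E ltnn.
have Sw' : S w'.
  rewrite /S /=; apply: (connect_trans Sw); apply: connect1.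
  by rewrite /artin_rel /= wE; apply: step_swap.
have := wmin _ Sw'; rewrite leqNgt /= wE.
by rewrite (swap_lt p q ba).
Qed.

End Words.
Section Sym.
Local Open Scope nat_scope.
Variable n : nat.
Variable m : 'I_n -> 'I_n -> nat.
Hypothesis msym : forall s t, s != t -> m s t = m t s.

Lemma step_sym u v : artin_step m u v -> artin_step m v u.
Proof.
case/existsP => s /existsP [t /andP [st /hasP [p pin /andP [/eqP tk /eqP vE]]]].
move: pin; rewrite mem_iota add0n ltnS => pu.
have hM : m s t <= size u - p.
  have := size_alt s t (m s t); rewrite -tk size_take_min size_drop; lia.
have stp : size (take p u) = p by rewrite size_takel.
apply/existsP; exists t; apply/existsP; exists s.
rewrite eq_sym st andTb (msym (t:=s)) ?(eq_sym t) //.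
subst v; set M := m s t in tk hM *.
set X := take p u ++ alt t s M ++ drop (p + M) u.
have dX : drop p X = alt t s M ++ drop (p + M) u by rewrite drop_size_cat.
have tX : take p X = take p u by rewrite take_size_cat.
have ddX : drop (p + M) X = drop (p + M) u.
  by rewrite (addnC p M) -drop_drop dX drop_size_cat ?size_alt // addnC.
have szX : size X = size u.
  rewrite /X !size_cat stp size_alt size_drop; lia.
apply/hasP; exists p.
  by rewrite mem_iota add0n ltnS szX.
rewrite dX take_size_cat ?size_alt // eqxx andTb tX ddX -tk.
by rewrite (addnC p M) -drop_drop !cat_take_drop.
Qed.

End Sym.
Section Count.
Local Open Scope nat_scope.
Variable n : nat.
Variable m : 'I_n -> 'I_n -> nat.
Variable pos : 'I_n -> nat.
Hypothesis pos_lt : forall x, pos x < n.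
Hypothesis msym : forall s t, s != t -> m s t = m t s.

Lemma rel_sym k : symmetric (@artin_rel n m k).
Proof. by move=> x y; apply/idP/idP; apply: step_sym. Qed.

Lemma count_le k :
  artin_count m k <= #|[set w : k.-tuple 'I_n | sorted (allowed m pos) w]|.
Proof.
rewrite /artin_count.
set f := fun u => finset (connect (@artin_rel n m k) u).
set L := [set w : k.-tuple 'I_n | _].
apply: leq_trans (leq_imset_card f L).
apply: subset_leq_card; apply/fintype.subsetP => _ /imsetP [u _ ->].
have [w /andP [uw sw]] := class_rep m pos_lt u.
apply/imsetP; exists w; first by rewrite inE.
have csym := sym_connect_sym (@rel_sym k).
apply/setP => x; rewrite !inE.
apply/idP/idP => h.
  by apply: connect_trans h; rewrite csym.
exact: connect_trans uw h.
Qed.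
End Count.
Section Transfer.
Local Open Scope nat_scope.
Variable n : nat.
Variable e : rel 'I_n.
Variable V : 'I_n -> nat.
Variables D N : nat.
Hypothesis V_pos : forall a, 0 < V a.
Hypothesis row : forall a, D * (\sum_(b | e a b) V b) <= N * V a.

Lemma card_predE (T : finType) (A : pred T) : #|[set x | A x]| = \sum_x (A x : nat).
Proof.
rewrite -sum1_card big_mkcond /=; apply: eq_bigr => x _; rewrite inE.
by case: (A x).
Qed.

Lemma card_cons k (Q : pred (seq 'I_n)) :
  #|[set w : k.+1.-tuple 'I_n | Q w]| <= \sum_b #|[set w : k.-tuple 'I_n | Q (b :: w)]|.
Proof.
pose Pair := [set x : 'I_n * k.-tuple 'I_n | Q (x.1 :: x.2)].
apply: (@leq_trans #|(fun x : 'I_n * k.-tuple 'I_n => [tuple of x.1 :: x.2]) @: Pair|).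
  apply: subset_leq_card; apply/fintype.subsetP => w; rewrite inE => Qw.
  apply/imsetP; exists (thead w, behead_tuple w); last exact: tuple_eta.
  by rewrite inE /= -[_ :: _]/(val [tuple of thead w :: behead_tuple w]) -tuple_eta.
apply: leq_trans (leq_imset_card _ _) _.
rewrite card_predE -(pair_big xpredT xpredT (fun b w => (Q (b :: val w) : nat))) /=.
by apply: leq_sum => b _; rewrite card_predE.
Qed.

Definition gcnt k a := #|[set w : k.-tuple 'I_n | path e a w]|.

Lemma gcnt_bound k a : D ^ k * gcnt k a <= N ^ k * V a.
Proof.
elim: k a => [|k IH] a.
  rewrite !expn0 !mul1n /gcnt; apply: leq_trans (max_card _) _.
  by rewrite card_tuple expn0.
apply: (@leq_trans (D * \sum_(b | e a b) (D ^ k * gcnt k b))).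
  rewrite expnS -mulnA leq_mul2l; apply/orP; right.
  rewrite -big_distrr /= leq_mul2l; apply/orP; right.
  apply: leq_trans (card_cons _ _) _.
  rewrite (bigID (e a)) /= addnC big1 ?add0n; last first.
    move=> b /negbTE eab; apply/eqP; rewrite cards_eq0; apply/eqP/setP => w.
    by rewrite !inE /= eab.
  by apply: leq_sum => b eab; rewrite /gcnt; apply: subset_leq_card;
     apply/fintype.subsetP => w; rewrite !inE /= eab.
apply: (@leq_trans (D * \sum_(b | e a b) (N ^ k * V b))).
  by rewrite leq_mul2l; apply/orP; right; apply: leq_sum => b _; apply: IH.
rewrite -big_distrr /= mulnCA.
have -> : N ^ k.+1 * V a = N ^ k * (N * V a) by rewrite expnS -mulnA mulnCA.
by rewrite leq_mul2l row orbT.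
Qed.

Lemma sorted_bound k :
  D ^ k * #|[set w : k.+1.-tuple 'I_n | sorted e w]| <= N ^ k * \sum_a V a.
Proof.
rewrite big_distrr /=.
apply: (@leq_trans (D ^ k * \sum_a gcnt k a)).
  by rewrite leq_mul2l card_cons orbT.
by rewrite big_distrr /=; apply: leq_sum => a _; apply: gcnt_bound.
Qed.
End Transfer.
Section Local.
Local Open Scope nat_scope.

Lemma sum_zero (G : nat -> nat) a b :
  (forall j, a <= j < b -> G j = 0) -> \sum_(a <= j < b) G j = 0.
Proof. by move=> H; rewrite big_nat_cond big1 // => j /andP [hj _]; exact: H. Qed.

Lemma desc_one (G : nat -> nat) c i : c < i ->
  (forall j, j < i -> j != c -> G j = 0) -> \sum_(0 <= j < i) G j = G c.
Proof.
move=> ci H; rewrite (big_cat_nat (leq0n c) (ltnW ci)) (big_ltn ci) /=.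
rewrite !sum_zero ?add0n ?addn0 // => j /andP [h1 h2]; apply: H; lia.
Qed.

Lemma geom i d : \sum_(i <= j < i + d) 2 ^ (i + d - 1 - j) + 1 = 2 ^ d.
Proof.
elim: d i => [|d IH] i; first by rewrite addn0 big_geq.
have h : i < i + d.+1 by lia.
rewrite (big_ltn h) /=.
have -> : i + d.+1 = i.+1 + d by lia.
have -> : i.+1 + d - 1 - i = d by lia.
by rewrite -addnA IH expnS mul2n -addnn.
Qed.

Definition Qpot (t : ctype) (i : nat) : nat :=
  match t with
  | TD k => if i <= k - 2 then 2 ^ (k - i) else 3
  | TE6 => nth 1 [:: 13; 13; 9; 6; 4; 2] i
  | TE7 => nth 1 [:: 32; 32; 23; 15; 11; 5; 2] i
  | TE8 => nth 1 [:: 71; 71; 52; 34; 25; 11; 5; 2] i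
  | _ => 2 ^ (ctype_rank t - 1 - i)
  end.

Lemma Qpot_gt0 t i : 0 < Qpot t i.
Proof.
case: t => [k|k|k| | | | | | | |p] /=; rewrite ?expn_gt0 //;
  try by case: ifP; rewrite ?expn_gt0.
all: by do 9?[case: i => [|i] //].
Qed.

Definition Sloc t i := \sum_(0 <= j < ctype_rank t)
  (if (i <= j) || (ctype_lab t i j != 2) then Qpot t j else 0).

Lemma split_S t i : i <= ctype_rank t -> Sloc t i =
  \sum_(0 <= j < i) (if ctype_lab t i j != 2 then Qpot t j else 0) +
  \sum_(i <= j < ctype_rank t) Qpot t j.
Proof.
move=> ir; rewrite /Sloc (big_cat_nat (leq0n i) ir); congr (_ + _).
  by apply: eq_big_nat => j /andP [_ ji]; rewrite leqNgt ji.
by apply: eq_big_nat => j /andP [ij _]; rewrite ij.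
Qed.

End Local.
Section Paths.
Local Open Scope nat_scope.

Definition is_path (t : ctype) : bool :=
  match t with TD _ | TE6 | TE7 | TE8 => false | _ => true end.

Lemma path_lab t i j : is_path t -> j < i -> ctype_lab t i j != 2 -> i = j.+1.
Proof.
move=> pt ji; rewrite /ctype_lab.
have -> : minn i j = j by lia.
have -> : maxn i j = i by lia.
case: t pt => [k|k|k| | | | | | | |p] //= _; repeat (case: ifP => //); lia.
Qed.

Lemma path_row t i : is_path t -> i < ctype_rank t -> Sloc t i < 4 * Qpot t i.
Proof.
move=> pt ir; rewrite split_S ?(ltnW ir) //.
have QE : forall j, Qpot t j = 2 ^ (ctype_rank t - 1 - j) by move=> j; case: t pt {ir}.
have [d rE] : exists d, ctype_rank t = i + d.+1 by exists (ctype_rank t - i).-1; lia.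
have T : \sum_(i <= j < ctype_rank t) Qpot t j + 1 = 2 ^ d.+1.
  rewrite -(geom i d.+1) rE; congr (_ + _); apply: eq_big_nat => j _.
  by rewrite QE rE.
have Dd : \sum_(0 <= j < i) (if ctype_lab t i j != 2 then Qpot t j else 0)
          <= 2 ^ d.+1.
  case: i ir rE {T} => [|i'] ir rE; first by rewrite big_geq.
  rewrite (@desc_one _ i') //.
    case: ifP => // _; rewrite QE rE.
    by have -> : i'.+1 + d.+1 - 1 - i' = d.+1 by lia.
  move=> j ji jne; case: ifP => // /(path_lab pt ji) E.
  by exfalso; move/eqP: jne; apply; lia.
have -> : Qpot t i = 2 ^ d by rewrite QE rE; congr (_ ^ _); lia.
move: T Dd; rewrite expnS; lia.
Qed.
End Paths.
Section DType.
Local Open Scope nat_scope.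

Lemma D_lab k i j : j < i -> i < k ->
  ctype_lab (TD k) i j != 2 -> j = (if i == k - 1 then k - 3 else i.-1).
Proof.
move=> ji ik; rewrite /ctype_lab.
have -> : minn i j = j by lia.
have -> : maxn i j = i by lia.
rewrite /=; repeat (case: ifP => //); lia.
Qed.

Lemma D_row k i : 4 <= k -> i < k -> Sloc (TD k) i < 4 * Qpot (TD k) i.
Proof.
move=> k4 ik; rewrite split_S ?(ltnW ik) //; change (ctype_rank (TD k)) with k.
case: (ltnP i (k - 1)) => [ik1 | ik1].
- have [e kE] : exists e, k = (i + e.+1).+1 by exists (k - i - 2); lia.
  have T : \sum_(i <= j < k) Qpot (TD k) j + 1 = 4 * 2 ^ e.+1.
    rewrite {1}kE big_nat_recr /= ?leq_addr //.
    have -> : (i + e.+1 <= k - 2) = false by apply/negbTE; lia.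
    rewrite (@eq_big_nat _ _ _ _ _ _ (fun j => 4 * 2 ^ (i + e.+1 - 1 - j))); last first.
      move=> j /andP [h1 h2].
      have -> : (j <= k - 2) = true by apply/idP; lia.
      have -> : k - j = (i + e.+1 - 1 - j) + 2 by lia.
      by rewrite expnD mulnC.
    rewrite -big_distrr /=.
    have := geom i e.+1; set S := \sum_(_ <= _ < _) _; lia.
  have Dd : \sum_(0 <= j < i) (if ctype_lab (TD k) i j != 2 then Qpot (TD k) j else 0)
          <= 2 ^ e.+3.
    case: i ik ik1 kE {T} => [|i'] ik ik1 kE; first by rewrite big_geq.
    rewrite (@desc_one _ i') //.
      case: ifP => // _ /=.
      have -> : (i' <= k - 2) = true by apply/idP; lia.
      by have -> : k - i' = e.+3 by lia.
    move=> j ji jne; case: ifP => // /(D_lab ji ik) E.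
    by exfalso; move/eqP: jne; apply; move: E; case: ifP => _; lia.
  have -> : Qpot (TD k) i = 2 ^ e.+2.
    rewrite /=; have -> : (i <= k - 2) = true by apply/idP; lia.
    by have -> : k - i = e.+2 by lia.
  move: T Dd; rewrite !expnS; lia.
- have iE : i = k - 1 by lia.
  have T : \sum_(i <= j < k) Qpot (TD k) j = 3.
    have -> : k = i.+1 by lia.
    rewrite big_nat1 /=; have -> : (i <= i.+1 - 2) = false by apply/negbTE; lia.
    by [].
  have Dd : \sum_(0 <= j < i) (if ctype_lab (TD k) i j != 2 then Qpot (TD k) j else 0)
          <= 8.
    rewrite (@desc_one _ (k - 3)); last 2 first.
    - lia.
    - move=> j ji jne; case: ifP => // /(D_lab ji ik) E.
      by exfalso; move/eqP: jne; apply; move: E; rewrite iE eqxx.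
    case: ifP => // _ /=.
    have -> : (k - 3 <= k - 2) = true by apply/idP; lia.
    by have -> : k - (k - 3) = 3 by lia.
  have -> : Qpot (TD k) i = 3.
    by rewrite /=; have -> : (i <= k - 2) = false by apply/negbTE; lia.
  lia.
Qed.
End DType.
Section EType.
Local Open Scope nat_scope.
Lemma E_row t i : ~~ is_path t -> (if t is TD _ then false else true) ->
  i < ctype_rank t -> Sloc t i < 4 * Qpot t i.
Proof.
case: t => // _ _ /=; (do 8?[case: i => [|i] //]) => _; rewrite /Sloc unlock; vm_compute; by [].
Qed.
End EType.
Section Global.
Local Open Scope nat_scope.

Lemma local_row t i : ctype_valid t -> i < ctype_rank t -> Sloc t i < 4 * Qpot t i.
Proof.
move=> vt ir; case pt: (is_path t); first exact: path_row.
case: t pt vt ir => [k|k|k| | | | | | | |p] //= _.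
- by move=> k4 ir; apply: D_row.
all: by move=> _ ir; apply: E_row.
Qed.

Fixpoint Vl (B : nat) (ts : seq ctype) (q : nat) : nat :=
  match ts with
  | [::] => 1
  | t :: ts' => if q < ctype_rank t then B ^ size ts' * Qpot t q
                else Vl B ts' (q - ctype_rank t)
  end.

Definition Tot B ts := \sum_(0 <= q < sumn (map ctype_rank ts)) Vl B ts q.

Definition Sg B ts p := \sum_(0 <= q < sumn (map ctype_rank ts))
  (if (p <= q) || (sum_lab ts p q != 2) then Vl B ts q else 0).

Lemma Vl_gt0 B ts q : 0 < B -> 0 < Vl B ts q.
Proof.
move=> B0; elim: ts q => [|t ts IH] q //=.
by case: ifP => _; rewrite ?muln_gt0 ?expn_gt0 ?B0 ?Qpot_gt0.
Qed.

Variables D B : nat.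

Definition goodDB (t : ctype) : Prop :=
  (forall i, i < ctype_rank t -> Qpot t i < D) /\
  D * \sum_(0 <= i < ctype_rank t) Qpot t i < B.

Fixpoint all_good (ts : seq ctype) : Prop :=
  match ts with [::] => True | t :: ts' => goodDB t /\ all_good ts' end.

Lemma shift_sum (F : nat -> nat) r n' :
  \sum_(r <= q < r + n') F q = \sum_(0 <= q < n') F (q + r).
Proof.
by rewrite -{1}(add0n r) big_addn addKn.
Qed.

Lemma Tot_bound ts : all_good ts -> D * Tot B ts <= B ^ size ts.
Proof.
elim: ts => [|t ts IH] H; first by rewrite /Tot big_geq ?muln0.
case: H => [[_ hB] H].
have IH' := IH H.
rewrite /Tot /= (big_cat_nat (leq0n _) (leq_addr _ _)) /= shift_sum.
rewrite (@eq_big_nat _ _ _ _ _ _ (fun q => B ^ size ts * Qpot t q)); last first.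
  by move=> q /andP [_ ->].
rewrite [X in _ + X](@eq_big_nat _ _ _ 0 _ _ (fun q => Vl B ts q)); last first.
  move=> q _; have -> : (q + ctype_rank t < ctype_rank t) = false.
    by apply/negbTE; rewrite -leqNgt leq_addl.
  by rewrite addnK.
rewrite -big_distrr /= -/(Tot B ts) mulnDr expnS.
set S := \sum_(_ <= _ < _) _ in hB *.
set X := B ^ size ts in IH' *.
move: IH' => IH'.
have h1 : X * (D * S).+1 <= X * B by rewrite leq_mul2l hB orbT.
rewrite mulnC; nia.
Qed.

End Global.
Section Global2.
Local Open Scope nat_scope.
Variables D B : nat.

Lemma Sg_bound ts p : all ctype_valid ts -> all_good D B ts -> 0 < B ->
  p < sumn (map ctype_rank ts) -> D * Sg B ts p <= (4 * D - 1) * Vl B ts p.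
Proof.
elim: ts p => [|t ts IH] p //= /andP [vt vts] [[hQ hB] H] B0 pn.
rewrite /Sg /= (big_cat_nat (leq0n _) (leq_addr _ _)) /= shift_sum.
case: (ltnP p (ctype_rank t)) => pr.
- rewrite (@eq_big_nat _ _ _ _ _ _ (fun q => B ^ size ts *
     (if (p <= q) || (ctype_lab t p q != 2) then Qpot t q else 0))); last first.
    move=> q /andP [_ qr]; rewrite /= ?pr ?qr /=.
    by case: ifP => _; rewrite ?muln0.
  rewrite [X in _ + X](@eq_big_nat _ _ _ 0 _ _ (fun q => Vl B ts q)); last first.
    move=> q _; have -> : p <= q + ctype_rank t by rewrite ltnW // ltn_addl.
    rewrite /=; have -> : (q + ctype_rank t < ctype_rank t) = false.
      by apply/negbTE; rewrite -leqNgt leq_addl.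
    by rewrite addnK.
  rewrite -big_distrr /= -/(Sloc t p) -/(Tot B ts) ?pr.
  have h1 := local_row vt pr.
  have h2 := Tot_bound H.
  have h3 := hQ p pr.
  set X := B ^ size ts in h2 *.
  set Sl := Sloc t p in h1 *.
  set Q := Qpot t p in h1 h3 *.
  set Tt := Tot B ts in h2 *.
  have h4 : D * Sl + 1 <= (4 * D - 1) * Q by nia.
  have h5 : X * (D * Sl + 1) <= X * ((4 * D - 1) * Q) by rewrite leq_mul2l h4 orbT.
  nia.
- rewrite sum_zero ?add0n; last first.
    move=> q /andP [_ qr] /=.
    have -> : (p <= q) = false by apply/negbTE; rewrite -ltnNge (leq_trans qr pr).
    by rewrite leqNgt qr.
  rewrite (_ : \sum_(0 <= q < _) _ = Sg B ts (p - ctype_rank t)); last first.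
    apply: eq_big_nat => q _ /=.
    have -> : (p <= q + ctype_rank t) = (p - ctype_rank t <= q) by rewrite leq_subLR addnC.
    rewrite ?ltnNge ?pr /= ?leq_addl ?addnK /=.
    by [].
  rewrite ?ltnNge ?pr /=.
  apply: IH => //; lia.
Qed.
End Global2.
Section Final.
Local Open Scope nat_scope.

Lemma sum_lab_sym ts i j : sum_lab ts i j = sum_lab ts j i.
Proof.
elim: ts i j => [|t ts IH] i j //=.
by rewrite andbC [(ctype_rank t <= i) && _]andbC IH /ctype_lab minnC maxnC.
Qed.

Lemma pow_lemma x k : 1 <= x -> x ^ k * (x + k) <= x * (x + 1) ^ k.
Proof.
move=> x1; elim: k => [|k IH]; first by rewrite !expn0 mul1n muln1 addn0.
have h : x ^ k <= (x + 1) ^ k.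
  by case: k {IH} => [|k]; rewrite ?expn0 // leq_exp2r // leq_addr.
rewrite !expnS.
set X := x ^ k in IH h *; set Y := (x + 1) ^ k in IH h *.
nia.
Qed.

Lemma term_le_sum (F : nat -> nat) i r : i < r -> F i <= \sum_(0 <= j < r) F j.
Proof.
move=> ir; rewrite (big_cat_nat (leq0n i) (ltnW ir)) (big_ltn ir) /=.
set A := \sum_(_ <= _ < _) _; set C := \sum_(_ <= _ < _) _; lia.
Qed.

Lemma all_good_of D B ts :
  \sum_(t <- ts) \sum_(0 <= i < ctype_rank t) Qpot t i < D -> D * D < B ->
  all_good D B ts.
Proof.
move=> + hB; elim: ts => [|t ts IH] //=; rewrite big_cons => h.
split; last by apply: IH; lia.
set S := \sum_(_ <= _ < _) _ in h *.
split.
  by move=> i ir; have := term_le_sum (Qpot t) ir; rewrite -/S; lia.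
have : S < D by lia.
move=> SD; apply: leq_ltn_trans hB; rewrite leq_mul2l ltnW ?orbT //.
Qed.

End Final.
Section Analysis.
Import Order.TTheory GRing.Theory Num.Theory.
Local Open Scope ring_scope.
Local Open Scope classical_set_scope.

Lemma expR_ln_bound (a : nat) (c : Rdefinitions.R) (k : nat) :
  1 <= c -> (a%:R : Rdefinitions.R) <= c ^+ k.+1 ->
  expR (ln (a%:R : Rdefinitions.R) / (k.+1)%:R) <= c.
Proof.
move=> c1 ac.
have c0 : 0 < c by apply: (Order.POrderTheory.lt_le_trans ltr01 c1).
have k0 : (0 : Rdefinitions.R) < (k.+1)%:R by rewrite ltr0n.
case: (posnP a) => [->|a0].
  by rewrite ln0 // mul0r exp.expR0.
have a0' : (0 : Rdefinitions.R) < a%:R by rewrite ltr0n.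
have ce : expR (ln c) = c by rewrite lnK // posrE.
rewrite -[leRHS]ce.
rewrite ler_expR ler_pdivrMr // mulr_natr -(lnXn _ c0) ler_ln ?posrE ?exprn_gt0 //.
Qed.

Lemma limsup_bound (s : nat -> nat) (c d K : nat) : (0 < d)%N -> (d <= c)%N ->
  (forall k, (K <= k)%N -> (d ^ k.+1 * s k.+1 <= c ^ k.+1)%N) ->
  (growth_limsup s <= ((c%:R / d%:R : Rdefinitions.R))%:E)%E.
Proof.
move=> d0 dc H.
have d0' : (0 : Rdefinitions.R) < d%:R by rewrite ltr0n.
rewrite /growth_limsup /limn_esup /limf_esup.
apply: le_trans (ereal_inf_lbound _) _.
  exists [set k : nat | (K <= k)%N] => //; by exists K.
apply: ge_ereal_sup => _ [k /= Kk <-].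
rewrite lee_fin; apply: expR_ln_bound.
  by rewrite ler_pdivlMr // mul1r ler_nat.
rewrite expr_div_n ler_pdivlMr ?exprn_gt0 // mulrC -natrX -natrM -natrX ler_nat.
exact: H.
Qed.
End Analysis.
Theorem theorem1 (n : nat) (m : 'I_n -> 'I_n -> nat) :
  0 < n -> spherical m ->
  (growth_limsup (artin_count m) < (4%:R : Rdefinitions.R)%:E)%E.
Proof.
move=> n0 [ts [vts [sn [sigma Hm]]]].
pose pos (x : 'I_n) : nat := sigma x.
have pos_lt : forall x, (pos x < n)%N by move=> x; exact: ltn_ord.
have msym : forall s t, s != t -> m s t = m t s.
  move=> s t st; have st' : t != s by rewrite eq_sym.
  by rewrite (Hm _ _ st) (Hm _ _ st') sum_lab_sym.
pose D := (\sum_(t <- ts) \sum_(0 <= i < ctype_rank t) Qpot t i).+1.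
pose B := (D * D).+1.
have good : all_good D B ts by apply: all_good_of.
have B0 : (0 < B)%N by [].
pose V (a : 'I_n) := Vl B ts (pos a).
have V_pos : forall a, (0 < V a)%N by move=> a; apply: Vl_gt0.
have row : forall a, (D * (\sum_(b | allowed m pos a b) V b) <= (4 * D - 1) * V a)%N.
  move=> a; rewrite big_mkcond /=.
  have -> : (\sum_b (if allowed m pos a b then V b else 0))%N = Sg B ts (pos a).
    rewrite /Sg sn big_mkord [RHS](reindex_inj (@perm_inj _ sigma)) /=.
    apply: eq_bigr => b _; rewrite /allowed /V.
    case: (eqVneq a b) => [->|ab]; first by rewrite leqnn.
    by rewrite Hm.
  by apply: Sg_bound => //; rewrite sn; exact: pos_lt.
set T := (\sum_a V a)%N.
have cnt : forall k, (D ^ k * artin_count m k.+1 <= (4 * D - 1) ^ k * T)%N.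
  move=> k; apply: leq_trans (sorted_bound V_pos row k).
  by rewrite leq_mul2l (@count_le _ m pos pos_lt msym k.+1) orbT.
have D1 : (1 <= D)%N by [].
apply: (@Order.POrderTheory.le_lt_trans _ _
   (((8 * D - 1)%:R / (2 * D)%:R : Rdefinitions.R))%:E).
  apply: (@limsup_bound _ _ _ (2 * D * T)); first by rewrite muln_gt0.
    lia.
  move=> k Kk.
  have h0 := cnt k.
  have hp := @pow_lemma (8 * D - 2) k ltac:(lia).
  have x1 : 8 * D - 2 + 1 = 8 * D - 1 by lia.
  rewrite x1 in hp.
  have eX : (8 * D - 2) ^ k = 2 ^ k * (4 * D - 1) ^ k.
    by rewrite -expnMn; congr (_ ^ _); lia.
  rewrite expnS expnMn [(8 * D - 1) ^ k.+1]expnS.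
  set a := artin_count m k.+1 in h0 *.
  set P := D ^ k in h0 *.
  set Nk := (4 * D - 1) ^ k in h0 eX *.
  set X := (8 * D - 2) ^ k in hp eX *.
  set Y := (8 * D - 1) ^ k in hp *.
  set Tk := 2 ^ k in eX *.
  have s1 : 2 * D * (Tk * (P * a)) <= 2 * D * (Tk * (Nk * T)).
    by rewrite leq_mul2l leq_mul2l h0 !orbT.
  have s2 : 2 * D * (Tk * (Nk * T)) = (2 * D * T) * X.
    rewrite eX; nia.
  have s3 : (2 * D * T) * X <= X * (8 * D - 2 + k).
    by rewrite mulnC leq_mul2l; apply/orP; right; lia.
  have s4 : (8 * D - 2) * Y <= (8 * D - 1) * Y by rewrite leq_mul2r; apply/orP; right; lia.
  have s5 : 2 * D * (Tk * P) * a = 2 * D * (Tk * (P * a)) by nia.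
  rewrite s5.
  exact: leq_trans s1 (leq_trans (eq_leq s2) (leq_trans s3 (leq_trans hp s4))).
rewrite lte_fin Num.Theory.ltr_pdivrMr ?Num.Theory.ltr0n ?muln_gt0 // -GRing.Theory.natrM Num.Theory.ltr_nat.
lia.
Qed.
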